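(* Assume (A1) with constant $R$ and (A3) with constant $C_h$. Then for every $x\in\mathcal{C}$, if $\beta>\beta_1(x)$, the point $x-t\nabla g(x)$ belongs to $\mathcal{C}$ for all $t\in[0,t_1(x)]$, where $$t_1(x)=\min\!\left(\sqrt{\frac{R}{2C_h}}\frac{1}{\|\nabla g(x)\|},\ \frac{(2\beta\sigma_{\min}(\mathrm{D}h(x))^2-\sigma_1(\mathrm{D}h(x))C_\lambda(x))R}{2C_h\|\nabla g(x)\|^2},\ \frac{1}{2\beta\|\mathrm{D}h(x)\|_{\mathrm{op}}^2}\right).$$
   Context: Let $\mathcal{E}$ be a Euclidean space with inner product $\langle\cdot,\cdot\rangle$ and norm $\|\cdot\|$ (2-norm on $\mathbb{R}^m$), and $f\colon\mathcal{E}\to\mathbb{R}$, $h\colon\mathcal{E}\to\mathbb{R}^m$ be $C^\infty$. $\mathrm{D}h(x)$ is the differential, $\mathrm{D}h(x)^*$ its adjoint, $\sigma_1$ and $\sigma_{\min}=\sigma_m$ the largest and $m$-th singular values. $\mathcal{D}=\{x:\operatorname{rank}\mathrm{D}h(x)=m\}$; for $x\in\mathcal{D}$, $\lambda(x)=(\mathrm{D}h(x)^* )^\dagger[\nabla f(x)]$ (Moore–Penrose), smooth on $\mathcal{D}$. For $\beta\ge0$, Fletcher's augmented Lagrangian is $g(x)=f(x)-\langle h(x),\lambda(x)\rangle+\beta\|h(x)\|^2$. (A1): there are $R,\underline{\sigma}>0$ with $\sigma_{\min}(\mathrm{D}h(x))\ge\underline{\sigma}$ for all $x\in\mathcal{C}=\{x:\|h(x)\|\le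 R\}$. (A3): there is $C_h>0$ such that for all $x\in\mathcal{C}$, $v\in\mathcal{E}$: $h(x+v)=h(x)+\mathrm{D}h(x)[v]+E(x,v)$ with $\|E(x,v)\|\le C_h\|v\|^2$. For $x\in\mathcal{C}$: $C_\lambda(x)=\|\mathrm{D}\lambda(x)\|_{\mathrm{op}}$ and $\beta_1(x)=\sigma_1(\mathrm{D}h(x))C_\lambda(x)/(2\sigma_{\min}(\mathrm{D}h(x))^2)$. *)

(* Defs.v *)
From HB Require Import structures.
From mathcomp Require Import all_boot all_order all_algebra.
From mathcomp Require Import all_classical all_reals all_analysis.
Set Implicit Arguments. Unset Strict Implicit. Unset Printing Implicit Defensive.
Import Order.TTheory GRing.Theory Num.Theory.
Import numFieldNormedType.Exports.
Local Open Scope classical_set_scope.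
Local Open Scope ring_scope.

Section Defs.
Variable R : realType.

(* The Euclidean space E is modelled as R^n = 'rV[R]_n (row vectors), with the
   standard inner product and the 2-norm (NOT mathcomp's sup norm). *)
Definition dot (n : nat) (u v : 'rV[R]_n) : R := (u *m v^T) 0 0.
Definition norm2 (n : nat) (u : 'rV[R]_n) : R := Num.sqrt (dot u u).

(* A linear map R^n -> R^m is represented by a matrix M : 'M_(n,m) acting on
   row vectors: v |-> v *m M.  Its adjoint is u |-> u *m M^T. *)

(* operator norm w.r.t. 2-norms; this is also the largest singular value sigma_1 *)
Definition opnorm (n m : nat) (M : 'M[R]_(n, m)) : R :=
  sup [set r | exists v : 'rV[R]_n, norm2 v <= 1 /\ r = norm2 (v *m M)].
Definition sigma1 (n m : nat) (M : 'M[R]_(n, m)) : R := opnorm M.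

(* m-th singular value of the linear map v |-> v *m M : R^n -> R^m, which equals
   the smallest singular value of its adjoint R^m -> R^n:
   inf over unit u in R^m of ||M^* u||. *)
Definition sigma_min (n m : nat) (M : 'M[R]_(n, m)) : R :=
  inf [set r | exists u : 'rV[R]_m, norm2 u = 1 /\ r = norm2 (u *m M^T)].

Fixpoint smooth_k (k : nat) (U V : normedModType R) (F : U -> V) : Prop :=
  match k with
  | 0 => continuous F
  | k'.+1 => (forall x, differentiable F x) /\
             (forall v : U, smooth_k k' (fun x => 'd F x v))
  end.
Definition smooth (U V : normedModType R) (F : U -> V) : Prop :=
  forall k, smooth_k k F.

(* Differential of h : R^n -> R^m at x, as an n x m matrix (Dh(x)[v] = v *m Dh x) *)
Definition Dmx (n m : nat) (F : 'rV[R]_n -> 'rV[R]_m) (x : 'rV[R]_n) : 'M[R]_(n, m) :=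
  lin1_mx ('d F x).

Definition grad (n : nat) (F : 'rV[R]_n -> R) (x : 'rV[R]_n) : 'rV[R]_n :=
  \row_i ('d F x (delta_mx 0 i)).

Definition penrose (p q : nat) (A : 'M[R]_(p, q)) (X : 'M[R]_(q, p)) : Prop :=
  [/\ A *m X *m A = A, X *m A *m X = X,
      (A *m X)^T = A *m X & (X *m A)^T = X *m A].
Definition mp_pinv (p q : nat) (A : 'M[R]_(p, q)) : 'M[R]_(q, p) :=
  xget 0 [set X | penrose A X].

(* lambda(x) = (Dh(x)^* )^dagger [grad f(x)].  Dh(x)^* : R^m -> R^n is the
   matrix (Dmx h x)^T acting on rows; its pseudo-inverse acts by the matrix
   mp_pinv ((Dmx h x)^T). *)
Definition lam (n m : nat) (f : 'rV[R]_n -> R) (h : 'rV[R]_n -> 'rV[R]_m)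
  (x : 'rV[R]_n) : 'rV[R]_m :=
  grad f x *m mp_pinv ((Dmx h x)^T).

Definition fletcher (n m : nat) (f : 'rV[R]_n -> R) (h : 'rV[R]_n -> 'rV[R]_m)
  (beta : R) (x : 'rV[R]_n) : R :=
  f x - dot (h x) (lam f h x) + beta * norm2 (h x) ^+ 2.

Definition Cset (n m : nat) (h : 'rV[R]_n -> 'rV[R]_m) (Rc : R) : set 'rV[R]_n :=
  [set x | norm2 (h x) <= Rc].

Definition C_lambda (n m : nat) (f : 'rV[R]_n -> R) (h : 'rV[R]_n -> 'rV[R]_m)
  (x : 'rV[R]_n) : R := opnorm (Dmx (lam f h) x).

Definition beta1 (n m : nat) (f : 'rV[R]_n -> R) (h : 'rV[R]_n -> 'rV[R]_m)
  (x : 'rV[R]_n) : R :=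
  sigma1 (Dmx h x) * C_lambda f h x / (2 * sigma_min (Dmx h x) ^+ 2).

(* a / b with the convention a / 0 = +oo (used with a > 0) *)
Definition edivpos (a b : R) : \bar R := if b == 0 then +oo%E else (a / b)%:E.

(* t_1(x), valued in the extended reals (the first two terms are +oo when
   grad g(x) = 0) *)
Definition t1 (n m : nat) (f : 'rV[R]_n -> R) (h : 'rV[R]_n -> 'rV[R]_m)
  (beta Rc Ch : R) (x : 'rV[R]_n) : \bar R :=
  let G := norm2 (grad (fletcher f h beta) x) in
  let J := Dmx h x in
  Order.min (Order.min
    (edivpos (Num.sqrt (Rc / (2 * Ch))) G)
    (edivpos ((2 * beta * sigma_min J ^+ 2 - sigma1 J * C_lambda f h x) * Rc)
             (2 * Ch * G ^+ 2)))
    (edivpos 1 (2 * beta * opnorm J ^+ 2)).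

End Defs.

(* Main.v *)
Require Import Defs.
From HB Require Import structures.
From mathcomp Require Import all_boot all_order all_algebra.
From mathcomp Require Import all_classical all_reals all_analysis.
From mathcomp Require Import ring lra.
Import Order.TTheory GRing.Theory Num.Theory.
Import numFieldNormedType.Exports.
Local Open Scope classical_set_scope.
Local Open Scope ring_scope.
Set Implicit Arguments. Unset Strict Implicit.

Section PartA.
Variable R : realType.
Implicit Types a b c k : R.

Lemma sq_le a b : 0 <= b -> a ^+ 2 <= b ^+ 2 -> a <= b.
Proof. move=> hb h; nra. Qed.

Lemma quad_disc a b c : 0 <= c ->
  (forall s : R, 0 <= a + 2 * s * b + s ^+ 2 * c) -> b ^+ 2 <= a * c.
Proof.
move=> hc h; have [c0|cpos] := eqVneq c 0.
  subst c; have [b0|bn0] := eqVneq b 0; first by subst b; rewrite mulr0 expr0n.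
  have := h (- (a + 1) / (2 * b)).
  have -> : a + 2 * (- (a + 1) / (2 * b)) * b + (- (a + 1) / (2 * b)) ^+ 2 * 0
    = -1 by field; rewrite ?bn0 ?pnatr_eq0 ?andbT.
  by rewrite ler0N1.
have cp : 0 < c by rewrite lt_def cpos hc.
have := h (- b / c).
have -> : a + 2 * (- b / c) * b + (- b / c) ^+ 2 * c = a - b ^+ 2 / c by field.
rewrite subr_ge0 ler_pdivrMr //.
Qed.

Variable n : nat.
Implicit Types u v w : 'rV[R]_n.

Lemma dotE u v : dot u v = \sum_i u 0 i * v 0 i.
Proof. by rewrite /dot mxE; apply: eq_bigr => i _; rewrite mxE. Qed.

Lemma dotC u v : dot u v = dot v u.
Proof. by rewrite !dotE; apply: eq_bigr => i _; rewrite mulrC. Qed.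

Lemma dotDl u v w : dot (u + v) w = dot u w + dot v w.
Proof. by rewrite !dotE -big_split; apply: eq_bigr => i _; rewrite mxE mulrDl. Qed.

Lemma dotZl a u v : dot (a *: u) v = a * dot u v.
Proof. by rewrite !dotE mulr_sumr; apply: eq_bigr => i _; rewrite mxE mulrA. Qed.

Lemma dotNl u v : dot (- u) v = - dot u v.
Proof. by rewrite -scaleN1r dotZl mulN1r. Qed.

Lemma dotDr u v w : dot w (u + v) = dot w u + dot w v.
Proof. by rewrite dotC dotDl !(dotC w). Qed.

Lemma dotZr a u v : dot v (a *: u) = a * dot v u.
Proof. by rewrite dotC dotZl dotC. Qed.

Lemma dot0l v : dot 0 v = 0.
Proof. by rewrite -(scale0r 0) dotZl mul0r. Qed.

Lemma dot_ge0 u : 0 <= dot u u.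
Proof. by rewrite dotE sumr_ge0 // => i _; rewrite -expr2 sqr_ge0. Qed.

Lemma norm2_ge0 u : 0 <= norm2 u.
Proof. exact: sqrtr_ge0. Qed.

Lemma norm2_sq u : norm2 u ^+ 2 = dot u u.
Proof. by rewrite /norm2 sqr_sqrtr // dot_ge0. Qed.

Lemma dot_CS u v : dot u v ^+ 2 <= dot u u * dot v v.
Proof.
apply: quad_disc; first exact: dot_ge0.
move=> s; have := dot_ge0 (u + s *: v).
rewrite !(dotDl, dotDr, dotZl, dotZr) (dotC v u).
by have -> : dot u u + s * dot u v + (s * dot u v + s * (s * dot v v)) =
  dot u u + 2 * s * dot u v + s ^+ 2 * dot v v by ring.
Qed.

Lemma dot_le u v : dot u v <= norm2 u * norm2 v.
Proof.
apply: sq_le; first by rewrite mulr_ge0 // norm2_ge0.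
by rewrite exprMn !norm2_sq dot_CS.
Qed.

Lemma norm2_scale a u : norm2 (a *: u) = `|a| * norm2 u.
Proof.
rewrite /norm2 dotZl dotZr mulrA -expr2 sqrtrM ?sqr_ge0 //.
by rewrite sqrtr_sqr.
Qed.

Lemma norm2_opp u : norm2 (- u) = norm2 u.
Proof. by rewrite -scaleN1r norm2_scale normrN1 mul1r. Qed.

Lemma norm2_triangle u v : norm2 (u + v) <= norm2 u + norm2 v.
Proof.
apply: sq_le; first by rewrite addr_ge0 // norm2_ge0.
rewrite norm2_sq !(dotDl, dotDr) (dotC v u).
have := dot_le u v; rewrite -!norm2_sq.
move=> h; nra.
Qed.

Lemma norm2_0 : norm2 (0 : 'rV[R]_n) = 0.
Proof. by rewrite /norm2 dot0l sqrtr0. Qed.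

End PartA.

Section PartA2.
Variable R : realType.

Lemma dot_mulmx p q (u : 'rV[R]_p) (M : 'M[R]_(p, q)) (v : 'rV[R]_q) :
  dot (u *m M) v = dot u (v *m M^T).
Proof. by rewrite /dot trmx_mul trmxK mulmxA. Qed.

Lemma dot_delta p (i : 'I_p) (w : 'rV[R]_p) : dot (delta_mx 0 i) w = w 0 i.
Proof.
rewrite dotE (bigD1 i) //= big1 ?addr0; first by rewrite mxE !eqxx mul1r.
by move=> j ji; rewrite mxE (negbTE ji) andbF mul0r.
Qed.

Lemma row_dot p (w : 'rV[R]_p) : \row_i dot (delta_mx 0 i) w = w.
Proof. by apply/rowP => i; rewrite mxE dot_delta. Qed.

Lemma opnorm_has_ub p q (M : 'M[R]_(p, q)) :
  exists K, 0 <= K /\ forall v, norm2 (v *m M) ^+ 2 <= K * norm2 v ^+ 2.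
Proof.
exists (\sum_j dot (row j M^T) (row j M^T)); split.
  by apply: sumr_ge0 => j _; apply: dot_ge0.
move=> v; rewrite norm2_sq norm2_sq dotE mulr_suml.
apply: ler_sum => j _.
have -> : (v *m M) 0 j = dot v (row j M^T).
  by rewrite dotE mxE; apply: eq_bigr => i _; rewrite !mxE.
rewrite -expr2 mulrC; exact: dot_CS.
Qed.

Lemma opnorm_set_ub p q (M : 'M[R]_(p, q)) :
  has_ubound [set r | exists v : 'rV[R]_p, norm2 v <= 1 /\ r = norm2 (v *m M)].
Proof.
have [K [K0 hK]] := opnorm_has_ub M.
exists (Num.sqrt K) => r [v [hv ->]].
apply: sq_le; first exact: sqrtr_ge0.
rewrite (sqr_sqrtr K0); apply: (le_trans (hK v)).
rewrite -[leRHS]mulr1; apply: ler_wpM2l => //.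
have := norm2_ge0 v; nra.
Qed.

Lemma opnorm_ge0 p q (M : 'M[R]_(p, q)) : 0 <= opnorm M.
Proof.
apply: (ub_le_sup (opnorm_set_ub M)); exists 0; split.
  by rewrite norm2_0 ler01.
by rewrite mul0mx norm2_0.
Qed.

Lemma opnorm_le p q (M : 'M[R]_(p, q)) v :
  norm2 (v *m M) <= opnorm M * norm2 v.
Proof.
have [K [K0 hK]] := opnorm_has_ub M.
have [v0|vn0] := eqVneq (norm2 v) 0.
  rewrite v0 mulr0; apply: sq_le => //; rewrite expr0n /=.
  by apply: (le_trans (hK v)); rewrite v0 expr0n /= mulr0.
have vp : 0 < norm2 v by rewrite lt_def vn0 norm2_ge0.
rewrite -ler_pdivrMr //.
have hs : norm2 (((norm2 v)^-1 *: v) *m M) <= opnorm M.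
  apply: (ub_le_sup (opnorm_set_ub M)); exists ((norm2 v)^-1 *: v); split => //.
  by rewrite norm2_scale ger0_norm ?invr_ge0 ?norm2_ge0 // mulVf.
by move: hs; rewrite -scalemxAl norm2_scale ger0_norm ?invr_ge0 ?norm2_ge0 // mulrC.
Qed.

Lemma opnorm_leT p q (M : 'M[R]_(p, q)) (u : 'rV[R]_q) :
  norm2 (u *m M^T) <= opnorm M * norm2 u.
Proof.
have h1 : norm2 (u *m M^T) ^+ 2 <= opnorm M * norm2 (u *m M^T) * norm2 u.
  rewrite norm2_sq -dot_mulmx.
  apply: (le_trans (dot_le _ _)); apply: ler_wpM2r; first exact: norm2_ge0.
  exact: opnorm_le.
move: h1; set w := u *m M^T => h1.
have := norm2_ge0 w; have := norm2_ge0 u; have := opnorm_ge0 M.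
move=> h2 h3 h4.
have [w0|wn0] := eqVneq (norm2 w) 0.
  by rewrite w0 mulr_ge0.
have wp : 0 < norm2 w by rewrite lt_def wn0 h4.
rewrite -(ler_pM2l wp) -expr2; apply: (le_trans h1).
by rewrite (mulrC (opnorm M)) -mulrA.
Qed.

Lemma sigma_min_le p q (M : 'M[R]_(p, q)) (u : 'rV[R]_q) :
  sigma_min M * norm2 u <= norm2 (u *m M^T).
Proof.
have [u0|un0] := eqVneq (norm2 u) 0.
  by rewrite u0 mulr0 norm2_ge0.
have up : 0 < norm2 u by rewrite lt_def un0 norm2_ge0.
rewrite -ler_pdivlMr //.
have hl : has_lbound [set r | exists u : 'rV[R]_q, norm2 u = 1 /\ r = norm2 (u *m M^T)].
  by exists 0 => r [w [_ ->]]; apply: norm2_ge0.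
have hs : sigma_min M <= norm2 (((norm2 u)^-1 *: u) *m M^T).
  apply: (ge_inf hl); exists ((norm2 u)^-1 *: u); split => //.
  by rewrite norm2_scale ger0_norm ?invr_ge0 ?norm2_ge0 // mulVf.
by move: hs; rewrite -scalemxAl norm2_scale ger0_norm ?invr_ge0 ?norm2_ge0 // mulrC.
Qed.

End PartA2.



Section PartB.
Variable R : realType.

Lemma psd_contract p (T : 'M[R]_p) k : T^T = T -> 0 <= k ->
  (forall u, 0 <= dot (u *m T) u) -> (forall u, dot (u *m T) u <= k * dot u u) ->
  forall u, norm2 (u *m T) <= k * norm2 u.
Proof.
move=> sT k0 pos bnd u.
have Bsym : forall a b : 'rV[R]_p, dot (a *m T) b = dot (b *m T) a.
  by move=> a b; rewrite dot_mulmx sT dotC.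
set w := u *m T.
have hd : dot (u *m T) w = dot w w by [].
have CS : dot w w ^+ 2 <= dot (u *m T) u * dot (w *m T) w.
  apply: quad_disc; first exact: pos.
  move=> s; have := pos (u + s *: w).
  rewrite mulmxDl -scalemxAl !(dotDl, dotDr, dotZl, dotZr) (Bsym w u) hd.
  move=> h; apply: (le_trans h); rewrite le_eqVlt; apply/orP; left; apply/eqP.
  ring.
have h2 : dot w w ^+ 2 <= (k ^+ 2 * dot u u) * dot w w.
  apply: (le_trans CS).
  have := bnd u; have := bnd w; have := pos u; have := pos w.
  have := dot_ge0 u; have := dot_ge0 w; nra.
have h3 : dot w w <= k ^+ 2 * dot u u.
  have [w0|wn0] := eqVneq (dot w w) 0.
    by rewrite w0 mulr_ge0 ?sqr_ge0 ?dot_ge0.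
  have wp : 0 < dot w w by rewrite lt_def wn0 dot_ge0.
  by rewrite -(ler_pM2r wp) -expr2.
apply: sq_le; first by rewrite mulr_ge0 ?norm2_ge0.
by rewrite exprMn !norm2_sq.
Qed.

Lemma penrose_key p q (A : 'M[R]_(p, q)) X : penrose A X ->
  A^T - X *m A *m A^T = 0.
Proof.
case=> h1 h2 h3 h4.
by rewrite -h4 -trmx_mul mulmxA h1 subrr.
Qed.

Lemma penrose_unique p q (A : 'M[R]_(p, q)) X1 X2 :
  penrose A X1 -> penrose A X2 -> X1 = X2.
Proof.
case=> a1 b1 c1 d1 [a2 b2 c2 d2].
have f1 : A^T = A^T *m (A *m X2).
  by rewrite -{1}a2 trmx_mul c2.
have f2 : X1 = X1 *m (X1^T *m A^T).
  by rewrite -trmx_mul c1 mulmxA b1.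
have g1 : A^T = X1 *m A *m A^T.
  by rewrite -{1}a1 -mulmxA trmx_mul d1.
have g2 : X2 = A^T *m (X2^T *m X2).
  by rewrite mulmxA -trmx_mul d2 b2.
have e1 : X1 = X1 *m A *m X2.
  rewrite {1}f2 {1}f1 !mulmxA -(mulmxA X1 X1^T) -trmx_mul c1.
  by rewrite !mulmxA b1.
have e2 : X2 = X1 *m A *m X2.
  rewrite {1}g2 {1}g1 -!mulmxA (mulmxA A^T) -trmx_mul d2 b2.
  by rewrite !mulmxA.
by rewrite e1 -e2.
Qed.

End PartB.



Section PartC.
Variable R : realType.

Lemma diff_near0 (V W : normedModType R) (d : V -> W) x :
  (\forall y \near x, d y = 0) -> differentiable d x /\ 'd d x = \0 :> (V -> W).
Proof.
move=> hd.
have dx0 : d x = 0 by apply: (nbhs_singleton hd).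
have key : d \o shift x = cst (d x) + \0 +o_ 0 id.
  apply/eqaddoP => eps eps0.
  have : \forall y \near (0 : V), d (y + x) = 0.
    by rewrite (near_shift 0 x) in hd; move: hd; apply: filterS => y /=; rewrite subr0.
  apply: filterS => y /= hy.
  have -> : (d \o +%R^~ x - (cst (d x) + \0)) y = 0.
    by rewrite !fctE /= hy dx0 addr0 subr0.
  by rewrite normr0 mulr_ge0 // ltW.
have e : 'd d x = \0 :> (V -> W).
  by apply: diff_unique => //; exact: cst_continuous.
split => //; apply/diff_locallyP; rewrite e; split => //; exact: cst_continuous.
Qed.

Lemma diff_near (V W : normedModType R) (f g : V -> W) x :
  differentiable f x -> (\forall y \near x, f y = g y) ->
  differentiable g x /\ 'd g x = 'd f x :> (V -> W).
Proof.
move=> df hfg.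
have [dd ed] := diff_near0 (d := g - f) (x := x)
  (filterS (fun y (e : f y = g y) => (etrans (congr1 (fun z => g y - z) e) (subrr _))) hfg).
have eg : g = f + (g - f) by rewrite addrC subrK.
rewrite eg; split; first exact: differentiableD.
by rewrite diffD // ed; apply/funext => v /=; rewrite addr0.
Qed.


Lemma diff_sumF (V W : normedModType R) (I : finType) (P : pred I)
  (F : I -> V -> W) x :
  (forall i, differentiable (F i) x) ->
  differentiable (fun y => \sum_(i | P i) F i y) x.
Proof.
move=> hF; rewrite -fct_sumE.
elim/big_ind : _ => //.
by move=> f g df dg; apply: differentiableD.
Qed.

Lemma diff_prodF (V : normedModType R) (I : finType) (P : pred I)
  (F : I -> V -> R) x :
  (forall i, differentiable (F i) x) ->
  differentiable (fun y => \prod_(i | P i) F i y) x.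
Proof.
move=> hF.
have -> : (fun y => \prod_(i | P i) F i y) = \prod_(i | P i) F i.
  by apply/funext => y; rewrite fct_prodE.
elim/big_ind : _ => //.
by move=> f g df dg; apply: differentiableM.
Qed.


Section MxDiff.
Variable V : normedModType R.

Definition mxdiff p q (F : V -> 'M[R]_(p, q)) x :=
  forall i j, differentiable (fun y => F y i j) x.

Lemma mxdiff_mul p q r (F : V -> 'M[R]_(p, q)) (G : V -> 'M[R]_(q, r)) x :
  mxdiff F x -> mxdiff G x -> mxdiff (fun y => F y *m G y) x.
Proof.
move=> hF hG i j.
have -> : (fun y => (F y *m G y) i j) =
    (fun y => \sum_(k : 'I_q | true) ((fun z => F z i k) * (fun z => G z k j)) y).
  by apply/funext => y; rewrite mxE.
by apply: diff_sumF => k; apply: differentiableM.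
Qed.

Lemma mxdiff_tr p q (F : V -> 'M[R]_(p, q)) x :
  mxdiff F x -> mxdiff (fun y => (F y)^T) x.
Proof.
move=> hF i j.
have -> : (fun y => (F y)^T i j) = (fun y => F y j i).
  by apply/funext => y; rewrite mxE.
exact: hF.
Qed.

Lemma mxdiff_cst p q (M : 'M[R]_(p, q)) x : mxdiff (fun _ => M) x.
Proof. by move=> i j; exact: differentiable_cst. Qed.

Lemma diff_cstM (c : R) (g : V -> R) x :
  differentiable g x -> differentiable (fun y => c * g y) x.
Proof. by move=> hg; have := differentiableM (differentiable_cst c x) hg. Qed.

Lemma mxdiff_det p (F : V -> 'M[R]_p) x :
  mxdiff F x -> differentiable (fun y => \det (F y)) x.
Proof.
move=> hF; rewrite /determinant.
apply: diff_sumF => s; apply: diff_cstM.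
by apply: diff_prodF => i; apply: hF.
Qed.

Lemma mxdiff_adj p (F : V -> 'M[R]_p) x :
  mxdiff F x -> mxdiff (fun y => \adj (F y)) x.
Proof.
move=> hF i j.
have -> : (fun y => \adj (F y) i j) =
  (fun y => (-1) ^+ (j + i) * \det (row' j (col' i (F y)))).
  by apply/funext => y; rewrite mxE.
apply: diff_cstM.
apply: mxdiff_det => k l.
have -> : (fun y => row' j (col' i (F y)) k l) = (fun y => F y (lift j k) (lift i l)).
  by apply/funext => y; rewrite !mxE.
exact: hF.
Qed.

Lemma mxdiff_scale p q (k : V -> R) (F : V -> 'M[R]_(p, q)) x :
  differentiable k x -> mxdiff F x -> mxdiff (fun y => k y *: F y) x.
Proof.
move=> hk hF i j.
have -> : (fun y => (k y *: F y) i j) = k * (fun y => F y i j).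
  by apply/funext => y; rewrite mxE.
exact: differentiableM.
Qed.

Lemma mxdiff_diff p q (F : V -> 'M[R]_(p, q)) x :
  mxdiff F x -> differentiable F x.
Proof.
move=> hF.
have -> : F = (fun y => \sum_(i : 'I_p | true) \sum_(j : 'I_q | true) F y i j *: delta_mx i j).
  by apply/funext => y; rewrite {1}(matrix_sum_delta (F y)).
apply: diff_sumF => i; apply: diff_sumF => j.
exact: differentiableZl.
Qed.

Lemma diff_mxdiff p q (F : V -> 'M[R]_(p, q)) x :
  differentiable F x -> mxdiff F x.
Proof.
move=> hF i j.
exact: (differentiable_comp hF (differentiable_coord _ i j)).
Qed.

End MxDiff.

End PartC.



Section PartD.
Variable R : realType.
Variable V : normedModType R.

Lemma diff_sum_val (W : normedModType R) (I : finType) (P : pred I)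
  (F : I -> V -> W) x :
  (forall i, differentiable (F i) x) -> forall v,
  'd (fun y => \sum_(i | P i) F i y) x v = \sum_(i | P i) 'd (F i) x v.
Proof.
move=> hF v; rewrite -fct_sumE.
pose K (a b : V -> W) := differentiable a x /\ 'd a x = b :> (V -> W).
suff [_ ->] : K (\sum_(i | P i) F i) (\sum_(i | P i) ('d (F i) x : V -> W)).
  by rewrite fct_sumE.
apply: (big_ind2 K).
- split; first by rewrite (_ : 0 = cst (0 : W)) //; exact: differentiable_cst.
  by rewrite (_ : 0 = cst (0 : W)) // diff_cst.
- move=> a1 b1 a2 b2 [da ea] [db eb]; split; first exact: differentiableD.
  by rewrite diffD // ea eb.
- by move=> i _; split.
Qed.

Lemma coordD p q (a : V -> 'M[R]_(p, q)) x i j v :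
  differentiable a x -> 'd (fun y => a y i j) x v = ('d a x v) i j.
Proof.
move=> da.
have dc : differentiable (fun y => a y i j) x by apply: diff_mxdiff.
rewrite -!deriveE //; rewrite derive_mx ?mxE //.
exact: diff_derivable.
Qed.

Lemma ddot p (a b : V -> 'rV[R]_p) x :
  differentiable a x -> differentiable b x ->
  differentiable (fun y => dot (a y) (b y)) x /\
  forall v, 'd (fun y => dot (a y) (b y)) x v =
    dot ('d a x v) (b x) + dot (a x) ('d b x v).
Proof.
move=> da db.
have e : (fun y => dot (a y) (b y)) =
  (fun y => \sum_(i : 'I_p | true) ((fun z => a z 0 i) * (fun z => b z 0 i)) y).
  by apply/funext => y; rewrite dotE.
have hi : forall i : 'I_p, differentiable ((fun z => a z 0 i) * (fun z => b z 0 i)) x.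
  by move=> i; apply: differentiableM; apply: diff_mxdiff.
rewrite e; split; first exact: diff_sumF.
move=> v; rewrite diff_sum_val // !dotE -big_split /=.
apply: eq_bigr => i _.
rewrite diffM; try by apply: diff_mxdiff.
rewrite [X in X = _]/GRing.add /= (coordD 0 i v db) (coordD 0 i v da).
rewrite addrC; congr (_ + _); try exact: mulrC.
Qed.

End PartD.



Section PartE.
Variable R : realType.

Lemma penrose_exist p q (J : 'M[R]_(p, q)) : J^T *m J \in unitmx ->
  penrose J^T (J *m invmx (J^T *m J)).
Proof.
move=> u; split.
- by rewrite mulmxA mulmxV // mul1mx.
- by rewrite -!mulmxA (mulmxA J^T) mulmxV // mulmx1.
- by rewrite mulmxA mulmxV // trmx1.
- rewrite !trmx_mul trmx_inv trmx_mul trmxK -!mulmxA //.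
Qed.

Lemma pinv_eq p q (J : 'M[R]_(p, q)) : J^T *m J \in unitmx ->
  mp_pinv J^T = J *m invmx (J^T *m J).
Proof.
move=> u; apply: (penrose_unique (A := J^T)); last exact: penrose_exist.
by apply: (xgetPex 0); exists (J *m invmx (J^T *m J)); exact: penrose_exist.
Qed.

Variables (n m : nat) (f : 'rV[R]_n -> R) (h : 'rV[R]_n -> 'rV[R]_m).
Hypotheses (hf : smooth f) (hh : smooth h).

Lemma diff_h y : differentiable h y.
Proof. exact: (hh 1).1. Qed.

Lemma diff_f y : differentiable f y.
Proof. exact: (hf 1).1. Qed.

Lemma mxdiff_Dmx y : mxdiff (Dmx h) y.
Proof.
move=> i j.
have -> : (fun z => Dmx h z i j) = (fun z => ('d h z (delta_mx 0 i)) 0 j).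
  by apply/funext => z; rewrite /Dmx mxE.
apply: diff_mxdiff; exact: ((hh 2).2 (delta_mx 0 i)).1.
Qed.

Lemma mxdiff_grad y : mxdiff (grad f) y.
Proof.
move=> i j.
have -> : (fun z => grad f z i j) = (fun z => 'd f z (delta_mx 0 j)).
  by apply/funext => z; rewrite /grad mxE.
exact: ((hf 2).2 (delta_mx 0 j)).1.
Qed.

Definition SS y := (Dmx h y)^T *m Dmx h y.

Lemma lam_diff x : \det (SS x) != 0 -> differentiable (lam f h) x.
Proof.
move=> hx.
pose lam' y := grad f y *m (Dmx h y *m ((\det (SS y))^-1 *: \adj (SS y))).
have mS : mxdiff SS x by apply: mxdiff_mul; [apply: mxdiff_tr|]; apply: mxdiff_Dmx.
have dl : differentiable lam' x.
  apply: mxdiff_diff; apply: mxdiff_mul; first exact: mxdiff_grad.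
  apply: mxdiff_mul; first exact: mxdiff_Dmx.
  apply: mxdiff_scale; last exact: mxdiff_adj.
  by apply: differentiableV => //; apply: mxdiff_det.
have cd : (fun y => \det (SS y)) @ x --> \det (SS x).
  exact: (differentiable_continuous (mxdiff_det mS)).
have nr := @cvgr_neq0 _ _ _ _ _ _ _ cd hx.
suff hn : \forall y \near x, lam' y = lam f h y by exact: (diff_near dl hn).1.
near=> y.
have hy : \det (SS y) != 0 by near: y; exact: nr.
have u : SS y \in unitmx by rewrite unitmxE unitfE.
rewrite /lam pinv_eq //.
by rewrite /invmx u.
Unshelve. all: by end_near.
Qed.

End PartE.



Section PartF.
Variable R : realType.

Lemma dmx_app p q (F : 'rV[R]_p -> 'rV[R]_q) x v : 'd F x v = v *m Dmx F x.
Proof. rewrite /Dmx; exact: (esym (mul_rV_lin1 ('d F x) v)). Qed.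

Lemma ddotJ n p (a b : 'rV[R]_n -> 'rV[R]_p) x :
  differentiable a x -> differentiable b x ->
  differentiable (fun y => dot (a y) (b y)) x /\
  forall v, 'd (fun y => dot (a y) (b y)) x v =
    dot (v *m Dmx a x) (b x) + dot (a x) (v *m Dmx b x).
Proof.
move=> da db; have [d e] := ddot da db; split => // v.
rewrite e; congr (_ + _); congr (dot _ _); exact: dmx_app.
Qed.

Lemma alg_entry n m (i : 'I_n) (dfi : R) (J La : 'M[R]_(n, m)) (hx lx : 'rV[R]_m)
  (gf : 'rV[R]_n) beta : dfi = gf 0 i ->
  dfi - (dot ('e_i *m J) lx + dot hx ('e_i *m La)) +
    beta * (dot ('e_i *m J) hx + dot hx ('e_i *m J)) =
  (gf - lx *m J^T - hx *m La^T + (2 * beta) *: (hx *m J^T)) 0 i.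
Proof.
move=> ->; rewrite (dotC hx) (dotC hx) !dot_mulmx !dot_delta !mxE.
ring.
Qed.

Variables (n m : nat) (f : 'rV[R]_n -> R) (h L : 'rV[R]_n -> 'rV[R]_m).
Hypotheses (hf : smooth f) (hh : smooth h).

Lemma grad_gen beta x : differentiable L x ->
  grad (fun y => f y - dot (h y) (L y) + beta * norm2 (h y) ^+ 2) x =
    grad f x - L x *m (Dmx h x)^T
    - h x *m (Dmx L x)^T + (2 * beta) *: (h x *m (Dmx h x)^T).
Proof.
move=> dl.
have dh := diff_h hh x.
have [d1 e1] := ddotJ dh dl.
have [d2 e2] := ddotJ dh dh.
have eg : (fun y => f y - dot (h y) (L y) + beta * norm2 (h y) ^+ 2) =
   (f \- (fun y => dot (h y) (L y))) + beta *: (fun y => dot (h y) (h y)).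
  by apply/funext => y; rewrite norm2_sq.
apply/rowP => i.
rewrite /grad mxE eg diffD; last 2 first.
- by apply: differentiableB => //; exact: diff_f.
- exact: differentiableZ.
rewrite diffB //; last exact: diff_f.
rewrite diffZ //.
rewrite [X in X = _]/GRing.add /= e1 e2.
have hd : 'd f x 'e_i = (\row_i0 'd f x 'e_i0) 0 i by rewrite mxE.
have H := (@alg_entry n m i ('d f x 'e_i) (Dmx h x) (Dmx L x) (h x) (L x)
   (\row_i0 'd f x 'e_i0) beta hd).
exact H.
Qed.

End PartF.



Section PartG.
Variable R : realType.

Lemma final_real (a t g s L Cl beta Ch Rc : R) :
  0 <= a -> a <= Rc -> 0 < Rc -> 0 <= t -> 0 <= g -> 0 < Ch ->
  0 < 2 * beta * s ^+ 2 - L * Cl ->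
  (g != 0 -> t <= Num.sqrt (Rc / (2 * Ch)) / g) ->
  (g != 0 -> t <= (2 * beta * s ^+ 2 - L * Cl) * Rc / (2 * Ch * g ^+ 2)) ->
  (1 - 2 * beta * t * s ^+ 2) * a + t * (L * (Cl * a)) + Ch * (t * g) ^+ 2 <= Rc.
Proof.
move=> a0 aR R0 t0 g0 C0; set al := 2 * beta * s ^+ 2 - L * Cl => al0 H1 H2.
have E : (1 - 2 * beta * t * s ^+ 2) * a + t * (L * (Cl * a)) = a - t * al * a.
  by rewrite /al; ring.
rewrite E.
have P0 : 0 <= t * al * a by rewrite !mulr_ge0 // ltW.
have [gz|gnz] := eqVneq g 0.
  rewrite gz mulr0 expr0n /= mulr0 addr0; lra.
have gp : 0 < g by rewrite lt_def gnz g0.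
have Q1 : Ch * (t * g) ^+ 2 <= Rc / 2.
  have h1 : t * g <= Num.sqrt (Rc / (2 * Ch)).
    by rewrite -ler_pdivlMr // H1.
  have h2 : (t * g) ^+ 2 <= Rc / (2 * Ch).
    rewrite -(@sqr_sqrtr _ (Rc / (2 * Ch))); last by rewrite divr_ge0 // ?mulr_ge0 // ltW.
    by rewrite ler_sqr ?nnegrE ?mulr_ge0 ?sqrtr_ge0.
  move: h2; rewrite ler_pdivlMr ?mulr_gt0 // => h2.
  nra.
have Q2 : Ch * (t * g) ^+ 2 <= t * al * Rc / 2.
  have h : t * (2 * Ch * g ^+ 2) <= al * Rc.
    have pp : 0 < 2 * Ch * g ^+ 2 by rewrite !mulr_gt0 // exprn_gt0.
    by rewrite -ler_pdivlMr //; exact: H2.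
  have -> : Ch * (t * g) ^+ 2 = t * (t * (2 * Ch * g ^+ 2)) / 2 by field.
  have -> : t * al * Rc / 2 = t * (al * Rc) / 2 by ring.
  by rewrite ler_pM2r // ler_wpM2l.
have [ah|ah] := lerP a (Rc / 2).
  lra.
have P1 : 0 <= t * al * (a - Rc / 2).
  by apply: mulr_ge0; [apply: mulr_ge0 => //; apply: ltW | rewrite subr_ge0 ltW].
have : t * al * (a - Rc / 2) = t * al * a - t * al * Rc / 2 by ring.
lra.
Qed.


Lemma main_pure n m (J La X : 'M[R]_(n, m)) (gf G : 'rV[R]_n) (hx Ev : 'rV[R]_m)
  (beta t Rc Ch : R) :
  penrose J^T X ->
  G = gf - gf *m X *m J^T - hx *m La^T + (2 * beta) *: (hx *m J^T) ->
  norm2 Ev <= Ch * norm2 (- t *: G) ^+ 2 ->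
  norm2 hx <= Rc -> 0 < Rc -> 0 < Ch -> 0 <= t -> 0 <= beta -> 0 < sigma_min J ->
  0 < 2 * beta * sigma_min J ^+ 2 - opnorm J * opnorm La ->
  2 * beta * t * opnorm J ^+ 2 <= 1 ->
  (norm2 G != 0 -> t <= Num.sqrt (Rc / (2 * Ch)) / norm2 G) ->
  (norm2 G != 0 -> t <= (2 * beta * sigma_min J ^+ 2 - opnorm J * opnorm La) * Rc
                         / (2 * Ch * norm2 G ^+ 2)) ->
  (exists u : 'rV[R]_m, norm2 u = 1) ->
  norm2 (hx + (- t *: G) *m J + Ev) <= Rc.
Proof.
move=> hP HG HE hR R0 C0 t0 b0 s0 al0 H3 H1 H2 [u1 hu1].
set s := sigma_min J in s0 al0 H2 *.
set L := opnorm J in al0 H3 H2 *.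
set Cl := opnorm La in al0 H2 *.
have L0 : 0 <= L := opnorm_ge0 J.
have Cl0 : 0 <= Cl := opnorm_ge0 La.
have sL : s <= L.
  have := sigma_min_le J u1; have := opnorm_leT J u1; rewrite hu1 !mulr1.
  by move=> a b; apply: le_trans b a.
have P0 : gf *m J - gf *m X *m J^T *m J = 0.
  have := penrose_key hP; rewrite trmxK => K.
  by rewrite -!mulmxA -mulmxBr !mulmxA K mulmx0.
have GJ : G *m J = (2 * beta) *: (hx *m J^T *m J) - hx *m La^T *m J.
  rewrite HG !mulmxDl !mulNmx -!scalemxAl.
  by rewrite P0 add0r addrC.
set T := 1%:M - (2 * beta * t) *: (J^T *m J).
set U := hx *m La^T *m J.
have V : hx + (- t *: G) *m J = hx *m T + t *: U.
  rewrite -scalemxAl GJ -/U /T mulmxBr mulmx1 -scalemxAr mulmxA.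
  rewrite scalerBr scalerA mulNr !scaleNr opprK addrA.
  by rewrite (mulrC t).
rewrite V.
have DT : forall u, dot (u *m T) u = dot u u - (2 * beta * t) * norm2 (u *m J^T) ^+ 2.
  move=> u; rewrite /T mulmxBr mulmx1 -scalemxAr dotDl dotNl dotZl mulmxA.
  by rewrite dot_mulmx norm2_sq.
have bT : norm2 (hx *m T) <= (1 - 2 * beta * t * s ^+ 2) * norm2 hx.
  have c0 : 0 <= 2 * beta * t by rewrite !mulr_ge0.
  have ss : s ^+ 2 <= L ^+ 2 by rewrite ler_sqr ?nnegrE // ltW.
  apply: psd_contract.
  - by rewrite /T linearB /= trmx1 linearZ /= trmx_mul trmxK.
  - by rewrite subr_ge0; apply: le_trans H3; rewrite ler_wpM2l.
  - move=> u; rewrite DT.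
    have h1 := opnorm_leT J u.
    have h2 : norm2 (u *m J^T) ^+ 2 <= L ^+ 2 * dot u u.
      have sn : 0 <= L * norm2 u := mulr_ge0 L0 (norm2_ge0 u).
      by rewrite -norm2_sq -exprMn ler_sqr ?nnegrE ?norm2_ge0.
    have := dot_ge0 u; have := norm2_ge0 (u *m J^T); nra.
  - move=> u; rewrite DT.
    have h1 := sigma_min_le J u.
    have h2 : s ^+ 2 * dot u u <= norm2 (u *m J^T) ^+ 2.
      have sn : 0 <= s * norm2 u := mulr_ge0 (ltW s0) (norm2_ge0 u).
      by rewrite -norm2_sq -exprMn ler_sqr ?nnegrE ?norm2_ge0.
    have := dot_ge0 u; nra.
have bU : norm2 U <= L * (Cl * norm2 hx).
  apply: le_trans (opnorm_le J _) _; apply: ler_wpM2l => //; exact: opnorm_leT.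
have bE : norm2 Ev <= Ch * (t * norm2 G) ^+ 2.
  by move: HE; rewrite norm2_scale normrN ger0_norm.
apply: (le_trans (norm2_triangle (hx *m T + t *: U) Ev)).
apply: (le_trans (lerD (norm2_triangle (hx *m T) (t *: U)) (lexx (norm2 Ev)))).
rewrite norm2_scale (ger0_norm t0).
apply: le_trans (final_real (norm2_ge0 hx) hR R0 t0 (norm2_ge0 G) C0 al0 H1 H2).
apply: lerD => //; apply: lerD => //.
by apply: ler_wpM2l.
Qed.

End PartG.



Section PartH.
Variable R : realType.

Lemma dot_eq0 n (v : 'rV[R]_n) : dot v v = 0 -> v = 0.
Proof.
rewrite dotE => /eqP; rewrite psumr_eq0 => [/allP hv|i _]; last first.
  by rewrite -expr2 sqr_ge0.
apply/rowP => i; rewrite mxE; have := hv i (mem_index_enum i).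
by rewrite /= -expr2 sqrf_eq0 => /eqP.
Qed.

Lemma unit_SS n m (J : 'M[R]_(n, m)) : 0 < sigma_min J -> J^T *m J \in unitmx.
Proof.
move=> s0; rewrite unitmxE unitfE; apply/negP => /det0P [v vn0 hv].
have h1 : norm2 (v *m J^T) = 0.
  apply/eqP; rewrite -sqrf_eq0 norm2_sq -dot_mulmx -mulmxA hv.
  by rewrite dotE big1 // => i _; rewrite mxE mul0r.
have h2 := sigma_min_le J v; rewrite h1 in h2.
have : norm2 v = 0.
  apply/eqP; rewrite eq_le norm2_ge0 andbT.
  by rewrite -(pmulr_rle0 _ s0).
move=> /eqP; rewrite -sqrf_eq0 norm2_sq => /eqP /dot_eq0 v0.
by rewrite v0 eqxx in vn0.
Qed.

Lemma edivpos_le (t a b : R) : b != 0 -> (t%:E <= edivpos a b)%E -> t <= a / b.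
Proof. by move=> bn0; rewrite /edivpos (negbTE bn0) lee_fin. Qed.

Lemma zsplit (V : zmodType) (a b c : V) : a = b + c + (a - b - c).
Proof. by rewrite [RHS]addrC -[a - b - c]addrA -opprD subrK. Qed.

Lemma pos_beta (b s p : R) : 0 <= p -> 0 < 2 * b * s ^+ 2 - p -> 0 < b.
Proof.
move=> p0 h; have s2 : 0 <= s ^+ 2 by apply: sqr_ge0.
nra.
Qed.

End PartH.

Unset Implicit Arguments.

Theorem mainTheorem7 (R : realType) (n m : nat)
  (f : 'rV[R]_n -> R) (h : 'rV[R]_n -> 'rV[R]_m)
  (hf : smooth f) (hh : smooth h)
  (Rc sig Ch : R)
  (A1 : 0 < Rc /\ 0 < sig /\
        forall x, x \in Cset h Rc -> sigma_min (Dmx h x) >= sig)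
  (A3 : 0 < Ch /\
        forall x (v : 'rV[R]_n), x \in Cset h Rc ->
          norm2 (h (x + v) - h x - v *m Dmx h x) <= Ch * norm2 v ^+ 2)
  (beta : R) (hbeta0 : 0 <= beta) (x : 'rV[R]_n) :
  x \in Cset h Rc -> beta > beta1 f h x ->
  forall t : R, 0 <= t -> (t%:E <= t1 f h beta Rc Ch x)%E ->
    x - t *: grad (fletcher f h beta) x \in Cset h Rc.
Proof.
move=> hxC hb t t0 ht1.
case: A1 => [R0 [sig0 A1']]; case: A3 => [C0 A3'].
rewrite in_setE /Cset /=.
destruct m as [|m'].
  by rewrite /norm2 dotE big_ord0 sqrtr0 ltW.
have hR : norm2 (h x) <= Rc by move: hxC; rewrite in_setE.
set J := Dmx h x.
set La := Dmx (lam f h) x.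
set G := grad (fletcher f h beta) x.
set gf := grad f x.
set X := mp_pinv J^T.
have s0 : 0 < sigma_min J := lt_le_trans sig0 (A1' x hxC).
have uS : J^T *m J \in unitmx := unit_SS s0.
have hP : penrose J^T X by rewrite /X pinv_eq //; exact: penrose_exist.
have dl : differentiable (lam f h) x.
  by apply: (lam_diff hf hh); rewrite -unitfE -unitmxE.
have HG : G = gf - gf *m X *m J^T - h x *m La^T + (2 * beta) *: (h x *m J^T).
  exact: (grad_gen hf hh beta dl).
have u1 : exists u : 'rV[R]_m'.+1, norm2 u = 1.
  exists (delta_mx 0 0); by rewrite /norm2 dot_delta mxE !eqxx sqrtr1.
have L0 : 0 < opnorm J.
  case: u1 => u hu; apply: (lt_le_trans s0).
  have := sigma_min_le J u; have := opnorm_leT J u; rewrite hu !mulr1.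
  by move=> a b; apply: le_trans b a.
have al0 : 0 < 2 * beta * sigma_min J ^+ 2 - opnorm J * opnorm La.
  move: hb; rewrite /beta1 /sigma1 /C_lambda -/J -/La.
  rewrite ltr_pdivrMr ?mulr_gt0 ?exprn_gt0 // => hb.
  by rewrite subr_gt0 (mulrC 2) -mulrA.
have b0 : 0 < beta.
  have p0 : 0 <= opnorm J * opnorm La := mulr_ge0 (opnorm_ge0 _) (opnorm_ge0 _).
  exact: (pos_beta p0 al0).
move: ht1; rewrite /t1 /= !le_min => /andP [/andP [e1 e2] e3].
have H3 : 2 * beta * t * opnorm J ^+ 2 <= 1.
  have bp : 0 < 2 * beta * opnorm J ^+ 2 by rewrite !mulr_gt0 // exprn_gt0.
  have := edivpos_le (lt0r_neq0 bp) e3.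
  rewrite ler_pdivlMr // => e.
  by apply: le_trans e; rewrite le_eqVlt; apply/orP; left; apply/eqP; ring.
have H1 : norm2 G != 0 -> t <= Num.sqrt (Rc / (2 * Ch)) / norm2 G.
  by move=> gn0; exact: (edivpos_le gn0 e1).
have H2 : norm2 G != 0 -> t <= (2 * beta * sigma_min J ^+ 2 - opnorm J * opnorm La) * Rc
                         / (2 * Ch * norm2 G ^+ 2).
  move=> gn0; apply: (edivpos_le _ e2).
  have h2 : (2 : R) != 0 by rewrite pnatr_eq0.
  by apply: mulf_neq0; [apply: mulf_neq0 => //; exact: lt0r_neq0 | exact: expf_neq0].
have HE := A3' x (- t *: G) hxC.
have EQ : x - t *: G = x + (- t *: G) by rewrite scaleNr.
rewrite EQ.
move: HE; set Ev := h (x + - t *: G) - h x - (- t *: G) *m J => HE.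
have EQ2 : h (x + - t *: G) = h x + (- t *: G) *m J + Ev.
  exact: zsplit.
rewrite EQ2.
exact: (main_pure hP HG HE hR R0 C0 t0 hbeta0 s0 al0 H3 H1 H2 u1).
Qed.
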